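(* Let $V,W$ be complex vector spaces, let $M=(M_1,\dots,M_s)\in\mathrm{Hom}(V,W)^s$, and suppose $\mathrm{rk}(M)\geq r$ for some $r\in\mathbb{Z}_{\geq 0}$. Then there is a finite-dimensional subspace $U\subseteq V$ such that the restricted tuple $(M_1|_U,\dots,M_s|_U)\in\mathrm{Hom}(U,W)^s$ has rank at least $r$.
   Context: Rank of a tuple: for vector spaces $V,W$ and $M=(M_1,\dots,M_s)\in\mathrm{Hom}(V,W)^s$, $\mathrm{rk}(M)$ is the infimum of $\mathrm{rk}(\sum_i\lambda_iM_i)\in\mathbb{Z}_{\ge0}\cup\{\infty\}$ over all nonzero $(\lambda_1,\dots,\lambda_s)\in\mathbb{C}^s$ (so $\mathrm{rk}(M)=\infty$ if $s=0$). *)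

(* Defs.v *)
From HB Require Import structures.
From mathcomp Require Import all_boot all_order all_algebra.
Set Implicit Arguments. Unset Strict Implicit. Unset Printing Implicit Defensive.
Import Order.TTheory GRing.Theory Num.Theory.
Local Open Scope ring_scope.

Section RankDefs.
Variables (K : numClosedFieldType) (V W : lmodType K).

Definition lin_indep (r : nat) (w : 'I_r -> W) : Prop :=
  forall c : 'I_r -> K, \sum_(i < r) c i *: w i = 0 -> forall i, c i = 0.

(* rk(f restricted to U) >= r, where U is a subspace of V given as a predicate:
   U contains r vectors whose images under f are linearly independent,
   i.e. dim f(U) >= r (possibly infinite). *)
Definition restr_rank_ge (U : V -> Prop) (f : V -> W) (r : nat) : Prop :=
  exists v : 'I_r -> V, (forall i, U (v i)) /\ lin_indep (fun i => f (v i)).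

Definition rank_ge (f : V -> W) (r : nat) : Prop :=
  restr_rank_ge (fun _ => True) f r.

Definition comb (s : nat) (M : 'I_s -> {linear V -> W}) (lam : 'I_s -> K)
  : V -> W := fun x => \sum_(i < s) lam i *: M i x.

(* rk(M|_U) >= r : every nonzero combination has rank >= r on U
   (vacuous when s = 0, matching rk = infinity) *)
Definition restr_tuple_rank_ge (U : V -> Prop) (s : nat)
  (M : 'I_s -> {linear V -> W}) (r : nat) : Prop :=
  forall lam : 'I_s -> K, (exists i, lam i != 0) ->
    restr_rank_ge U (comb M lam) r.

Definition tuple_rank_ge (s : nat) (M : 'I_s -> {linear V -> W}) (r : nat)
  : Prop := forall lam : 'I_s -> K, (exists i, lam i != 0) ->
    rank_ge (comb M lam) r.

Definition in_span (n : nat) (u : 'I_n -> V) (x : V) : Prop :=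
  exists c : 'I_n -> K, x = \sum_(j < n) c j *: u j.

End RankDefs.

(* Main.v *)
Set Warnings "-notation-overridden,-ambiguous-paths,-notation-incompatible-prefix".
From HB Require Import structures.
From mathcomp Require Import all_boot all_order all_algebra.
From Stdlib Require Import Classical.
From mathcomp Require Import zify.
Require Import Defs.
Set Implicit Arguments. Unset Strict Implicit.
Import GRing.Theory Num.Theory.
Local Open Scope ring_scope.



Lemma span_fin (F : fieldType) (N : nat) (A : Type) (g : A -> 'rV[F]_N) :
  exists m (a : 'I_m -> A), forall x, (g x <= \matrix_(l < m) g (a l))%MS.
Proof.
suff H : forall d m (a : 'I_m -> A),
    (N - \rank (\matrix_(l < m) g (a l)) <= d)%N ->
    exists m (a : 'I_m -> A), forall x, (g x <= \matrix_(l < m) g (a l))%MS.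
  apply: (H N 0 (fun l : 'I_0 => let: Ordinal _ Hl := l in
                   False_rect A (Bool.diff_false_true Hl))).
  by rewrite leq_subr.
elim=> [|d IH] m a Hd.
  exists m, a => x; apply: submx_full.
  have := rank_leq_col (\matrix_(l < m) g (a l)).
  by rewrite /row_full; move: Hd; set k := \rank _ => Hd Hk; apply/eqP; lia.
case: (classic (forall x, (g x <= \matrix_(l < m) g (a l))%MS)) => [H|H].
  by exists m, a.
move: H => /not_all_ex_not [x Hx].
pose a' (l : 'I_(m + 1)) := match split l with inl l' => a l' | inr _ => x end.
apply: (IH _ a').
set B := \matrix_(l < m) g (a l).
have -> : \matrix_(l < m + 1) g (a' l) = col_mx B (g x).
  apply/matrixP => l c; rewrite -[l]splitK; case: (split l) => l'.
    by rewrite col_mxEu !mxE /a' unsplitK.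
  by rewrite col_mxEd !mxE /a' unsplitK (ord1 l').
rewrite -(addsmxE B (g x)).1.
have lt : (\rank B < \rank (B + g x)%MS)%N.
  apply: rank_ltmx; rewrite ltmxE addsmxSl /=; apply/negP => Hle.
  by apply: Hx; apply: submx_trans Hle; apply: addsmxSr.
have := rank_leq_col (B + g x)%MS.
move: Hd lt; set k := \rank B; set k' := \rank _; lia.
Qed.

Lemma sum_enum (R : nmodType) (T : finType) (h : 'I_#|{: T}| -> R) :
  \sum_(k < #|{: T}|) h k = \sum_(p : T) h (enum_rank p).
Proof.
rewrite (reindex (@enum_rank T)) //.
by exists enum_val => x _; [apply: enum_rankK | apply: enum_valK].
Qed.

Section Main.
Variables (K : numClosedFieldType) (V W : lmodType K) (s : nat)
  (M : 'I_s -> {linear V -> W}) (r : nat).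

Definition nP := #|{: 'I_s * 'I_r}|.
Definition idx (i : 'I_s) (j : 'I_r) : 'I_nP := enum_rank (i, j).
Definition NF := #|{: {ffun 'I_r -> 'I_s}}|.

Lemma sum_idx (R : nmodType) (h : 'I_nP -> R) :
  \sum_(k < nP) h k = \sum_i \sum_j h (idx i j).
Proof. rewrite pair_bigA (@sum_enum _ (prod 'I_s 'I_r) h); by apply: eq_bigr => -[i j]. Qed.

Lemma sum_NF (R : nmodType) (h : 'I_NF -> R) :
  \sum_(k < NF) h k = \sum_(f : {ffun 'I_r -> 'I_s}) h (enum_rank f).
Proof. exact: (@sum_enum _ {ffun 'I_r -> 'I_s} h). Qed.

Definition w (t : 'I_r -> V) (k : 'I_nP) : W :=
  let p := enum_val k in M p.1 (t p.2).
Definition rho t (x : 'rV[K]_nP) : W := \sum_(k < nP) x 0 k *: w t k.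
Definition admissible t (Y : 'M[K]_(nP, r)) :=
  forall x, rho t x = 0 -> x *m Y = 0.
Definition Mlam (lam : 'I_s -> K) (Y : 'M[K]_(nP, r)) : 'M[K]_r :=
  \matrix_(j, c) \sum_i lam i * Y (idx i j) c.
Definition Xlam (lam : 'I_s -> K) : 'M[K]_(r, nP) :=
  \matrix_(j, k) (let p := enum_val k in if p.2 == j then lam p.1 else 0).
Definition ver (lam : 'I_s -> K) : 'rV[K]_NF :=
  \row_k \prod_j lam ((enum_val k : {ffun 'I_r -> 'I_s}) j).
Definition test (Y : 'M[K]_(nP, r)) : 'rV[K]_NF :=
  \row_k \det (\matrix_(j, c) Y (idx ((enum_val k : {ffun 'I_r -> 'I_s}) j) j) c).

Lemma w_idx t i j : w t (idx i j) = M i (t j).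
Proof. by rewrite /w /idx enum_rankK. Qed.

Lemma Xlam_idx lam j i j' : Xlam lam j (idx i j') = if j' == j then lam i else 0.
Proof. by rewrite /Xlam mxE /idx enum_rankK. Qed.

Lemma rhoX t lam (d : 'rV[K]_r) :
  rho t (d *m Xlam lam) = \sum_j d 0 j *: comb M lam (t j).
Proof.
rewrite /rho sum_idx exchange_big /=; apply: eq_bigr => j _.
rewrite /comb scaler_sumr; apply: eq_bigr => i _.
rewrite w_idx mxE scalerA; congr (_ *: _).
rewrite (bigD1 j) //= Xlam_idx eqxx big1 ?addr0 //.
by move=> j' /negbTE ne; rewrite Xlam_idx eq_sym ne mulr0.
Qed.

Lemma XY lam Y : Xlam lam *m Y = Mlam lam Y.
Proof.
apply/matrixP => j c; rewrite !mxE sum_idx; apply: eq_bigr => i _.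
rewrite (bigD1 j) //= Xlam_idx eqxx big1 ?addr0 //.
by move=> j' /negbTE ne; rewrite Xlam_idx ne mul0r.
Qed.

Lemma rho_lin t m (c : 'rV[K]_m) (B : 'M[K]_(m, nP)) :
  rho t (c *m B) = \sum_l c 0 l *: rho t (row l B).
Proof.
rewrite /rho; under eq_bigr do rewrite mxE scaler_suml.
rewrite exchange_big /=; apply: eq_bigr => l _.
by rewrite scaler_sumr; apply: eq_bigr => k _; rewrite mxE scalerA.
Qed.

Lemma test_ver lam Y :
  \sum_(k < NF) test Y 0 k * ver lam 0 k = \det (Mlam lam Y).
Proof.
rewrite sum_NF /determinant.
under eq_bigr do rewrite !mxE enum_rankK.
under [RHS]eq_bigr => sigma _.
  rewrite /Mlam; under eq_bigr do rewrite mxE.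
  rewrite bigA_distr_bigA /= mulr_sumr.
  over.
rewrite /= exchange_big /=; apply: eq_bigr => f _.
rewrite mulr_suml; apply: eq_bigr => sigma _.
rewrite big_split /= -mulrA; congr (_ * _); rewrite mulrC; congr (_ * _).
by apply: eq_bigr => j _; rewrite mxE.
Qed.


Lemma indep_of_det t lam Y : admissible t Y -> \det (Mlam lam Y) != 0 ->
  lin_indep (fun j => comb M lam (t j)).
Proof.
move=> adm hdet d hd j.
pose dv : 'rV[K]_r := \row_j d j.
have h0 : dv *m Mlam lam Y = 0.
  rewrite -XY mulmxA; apply: adm; rewrite rhoX.
  by under eq_bigr do rewrite mxE.
have un : Mlam lam Y \in unitmx by rewrite unitmxE unitfE.
have : dv = 0 by rewrite -(mulmxK un dv) h0 mul0mx.
by move=> /matrixP /(_ 0 j); rewrite !mxE.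
Qed.

Lemma Y_of_indep t lam : lin_indep (fun j => comb M lam (t j)) ->
  exists Y, admissible t Y /\ Mlam lam Y = 1%:M.
Proof.
move=> hind.
have [k [a Ha]] := @span_fin K nP _ (fun x : {x : 'rV[K]_nP | rho t x = 0} => proj1_sig x).
set Rb := \matrix_(l < k) proj1_sig (a l).
have Rrow : forall l, rho t (row l Rb) = 0.
  by move=> l; rewrite rowK; case: (a l).
have Rsub : forall x, rho t x = 0 -> (x <= Rb)%MS.
  by move=> x hx; exact: (Ha (exist _ x hx)).
have Rin : forall x, (x <= Rb)%MS -> rho t x = 0.
  move=> x /submxP [c ->]; rewrite rho_lin big1 // => l _.
  by rewrite Rrow scaler0.
set X := Xlam lam.
set C := col_mx X Rb.
set D := col_mx (1%:M : 'M[K]_r) (0 : 'M[K]_(k, r)).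
have HD : (D^T <= C^T)%MS.
  rewrite submxE; set Kc := cokermx C^T.
  have HC := mulmx_coker C^T.
  rewrite -/Kc /C tr_col_mx -[Kc]vsubmxK mul_row_col in HC.
  rewrite /D tr_col_mx -[Kc]vsubmxK mul_row_col trmx1 trmx0 mul1mx mul0mx addr0.
  apply/eqP; apply: trmx_inj; rewrite trmx0; apply/row_matrixP => l.
  rewrite row0.
  have HC' := congr1 (fun A => row l A^T) HC.
  rewrite /= linearD /= !trmx_mul !trmxK trmx0 row0 linearD /= !row_mul in HC'.
  set u := row l (usubmx Kc)^T in HC' *.
  set v := row l (dsubmx Kc)^T in HC'.
  have huX : u *m X = (- v) *m Rb.
    by rewrite mulNmx; apply/eqP; rewrite -subr_eq0 opprK HC'.
  have h0 : rho t (u *m X) = 0 by apply: Rin; rewrite huX submxMl.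
  rewrite rhoX in h0.
  rewrite -/u; apply/rowP => j; have /= -> := hind (fun j => u 0 j) h0 j; by rewrite mxE.
have [Y' HY'] := submxP HD.
exists Y'^T.
have HCY : C *m Y'^T = D by rewrite -[D]trmxK HY' trmx_mul trmxK.
rewrite /C mul_col_mx in HCY; case: (eq_col_mx HCY) => hX hR.
split; last by rewrite -XY hX.
move=> x hx; have [c ->] := submxP (Rsub x hx).
by rewrite -mulmxA hR mulmx0.
Qed.

End Main.

Unset Implicit Arguments.
Unset Strict Implicit.

Theorem lemma3p4 (K : numClosedFieldType) (V W : lmodType K) (s : nat)
  (M : 'I_s -> {linear V -> W}) (r : nat) :
  tuple_rank_ge M r ->
  exists (n : nat) (u : 'I_n -> V), restr_tuple_rank_ge (in_span u) M r.
Proof.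
move=> H.
pose A := {p : ('I_r -> V) * 'M[K]_(nP s r, r) | admissible M p.1 p.2}.
have [m [a Ha]] := @span_fin K (NF s r) A (fun p => test (proj1_sig p).2).
pose wit l := proj1_sig (a l).
pose n := #|{: 'I_m * 'I_r}|.
pose u (k : 'I_n) := let p := enum_val k in (wit p.1).1 p.2.
exists n, u => lam hlam.
have [v [_ hv]] := H lam hlam.
have [Y [adm hY]] := Y_of_indep hv.
have [c hc] := submxP (Ha (exist _ (v, Y) adm)).
have hne : \sum_k test Y 0 k * ver r lam 0 k != 0.
  by rewrite test_ver hY det1 oner_neq0.
have [l hl] : exists l, \det (Mlam lam (wit l).2) != 0.
  apply: NNPP => hno; move: hne; rewrite /= hc.
  under eq_bigr do rewrite mxE mulr_suml.
  rewrite exchange_big big1 ?eqxx // => l _.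
  have hz : \det (Mlam lam (wit l).2) = 0.
    by apply/eqP; apply/negPn/negP => hn; apply: hno; exists l.
  under eq_bigr do rewrite -mulrA.
  rewrite -mulr_sumr (_ : \sum_(k < _) _ = 0) ?mulr0 //.
  apply: (etrans _ hz); rewrite -test_ver; apply: eq_bigr => k _; by rewrite !mxE.
have indep := indep_of_det (proj2_sig (a l)) hl.
exists (wit l).1; split; last exact: indep.
move=> j; exists (fun k => if k == enum_rank (l, j) then 1 else 0).
rewrite (bigD1 (enum_rank (l, j))) //= eqxx scale1r big1 ?addr0.
  by rewrite /u enum_rankK.
by move=> k /negbTE ->; rewrite scale0r.
Qed.
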